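(* Let $K$ be a field, $m\ge2$, $d_1,\ldots,d_m$ positive integers, and $I_2(D)\subset K[x_1,\ldots,x_m,y_1,\ldots,y_m]$ the ideal generated by the $2$-minors of $D=\begin{pmatrix}x_1^{d_1}&\cdots&x_m^{d_m}\\ y_1^{d_1}&\cdots&y_m^{d_m}\end{pmatrix}$. Then $I_2(D)$ is prime if and only if $\gcd(d_i,d_j)=1$ for every $1\le i<j\le m$. *)

(* Defs.v *)
From HB Require Import structures.
From mathcomp Require Import all_boot all_order all_algebra.
From mathcomp Require Import mpoly.
Set Implicit Arguments. Unset Strict Implicit. Unset Printing Implicit Defensive.
Import Order.TTheory GRing.Theory Num.Theory.
Local Open Scope ring_scope.

Definition in_ideal_gen (R : comNzRingType) (gens : seq R) (p : R) : Prop :=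
  exists c : seq R, p = \sum_(k < size gens) c`_k * gens`_k.

Definition prime_ideal (R : comNzRingType) (I : R -> Prop) : Prop :=
  ~ I 1 /\ forall a b : R, I (a * b) -> I a \/ I b.

Definition xv (K : fieldType) (m : nat) (i : 'I_m) : {mpoly K[m + m]} :=
  'X_(lshift m i).
Definition yv (K : fieldType) (m : nat) (i : 'I_m) : {mpoly K[m + m]} :=
  'X_(rshift m i).

Definition minorD (K : fieldType) (m : nat) (d : 'I_m -> nat) (i j : 'I_m)
  : {mpoly K[m + m]} :=
  xv K i ^+ d i * yv K j ^+ d j - xv K j ^+ d j * yv K i ^+ d i.

Definition minors2 (K : fieldType) (m : nat) (d : 'I_m -> nat)
  : seq {mpoly K[m + m]} :=
  [seq minorD K d ij.1 ij.2 | ij <- enum [pred ij : 'I_m * 'I_m | (ij.1 < ij.2)%N]].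

Definition I2D (K : fieldType) (m : nat) (d : 'I_m -> nat)
  : {mpoly K[m + m]} -> Prop :=
  in_ideal_gen (minors2 K d).

(* Main.v *)
Require Import Defs.
From HB Require Import structures.
From mathcomp Require Import all_boot all_order all_algebra.
From mathcomp Require Import mpoly.
From mathcomp Require Import zify ring.
Set Implicit Arguments. Unset Strict Implicit. Unset Printing Implicit Defensive.
Import Order.TTheory GRing.Theory Num.Theory.
Local Open Scope ring_scope.

Lemma mod_cancel a b c dd : coprime dd c -> (a * c = b * c %[mod dd])%N -> (a = b %[mod dd])%N.
Proof.
move=> hco; wlog hab : a b / (a <= b)%N => [H hm|hm].
  by case: (leqP a b) => h; [exact: H | apply/esym/H; [exact: ltnW|]].
apply/eqP; rewrite eq_sym eqn_mod_dvd //.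
have : (b * c == a * c %[mod dd])%N by rewrite hm.
by rewrite eqn_mod_dvd ?leq_mul2r ?hab ?orbT // -mulnBl Gauss_dvdl.
Qed.

Lemma gap a b c : (a < b)%N -> (a = b %[mod c])%N -> (c <= b - a)%N.
Proof.
move=> hab hm.
have : (b == a %[mod c])%N by rewrite hm.
rewrite eqn_mod_dvd; last exact: ltnW.
move=> /dvdn_leq; apply.
by rewrite subn_gt0.
Qed.

Section Ideal.
Variables (K : fieldType) (m : nat) (d : 'I_m -> nat).
Local Notation P := {mpoly K[m + m]}.
Local Notation G := (minors2 K d).
Local Notation I := (@I2D K m d).

Lemma idealP p : I p <-> exists f : nat -> P, p = \sum_(k < size G) f k * G`_k.
Proof.
split=> [[c ->]|[f ->]]; first by exists (nth 0 c).
exists (mkseq f (size G)); apply: eq_bigr => k _; by rewrite nth_mkseq.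
Qed.

Lemma I0 : I 0.
Proof. by apply/idealP; exists (fun _ => 0); rewrite big1 // => k _; rewrite mul0r. Qed.

Lemma ID p q : I p -> I q -> I (p + q).
Proof.
move=> /idealP[f ->] /idealP[g ->]; apply/idealP; exists (fun k => f k + g k).
by rewrite -big_split; apply: eq_bigr => k _; rewrite mulrDl.
Qed.

Lemma IM r p : I p -> I (r * p).
Proof.
move=> /idealP[f ->]; apply/idealP; exists (fun k => r * f k).
by rewrite mulr_sumr; apply: eq_bigr => k _; rewrite mulrA.
Qed.

Lemma IN p : I p -> I (- p).
Proof. by move=> h; rewrite -mulN1r; apply: IM. Qed.

Lemma IB p q : I p -> I q -> I (p - q).
Proof. by move=> hp hq; apply: ID => //; apply: IN. Qed.

Lemma Iminor (i j : 'I_m) : (i < j)%N -> I (minorD K d i j).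
Proof.
move=> hij; apply/idealP.
have hin : (i, j) \in enum [pred ij : 'I_m * 'I_m | (ij.1 < ij.2)%N] by rewrite mem_enum.
set s := enum _ in hin.
have hk : (index (i, j) s < size G)%N by rewrite size_map index_mem.
exists (fun k => (k == index (i, j) s)%:R).
rewrite (bigD1 (Ordinal hk)) //= eqxx mul1r big1 ?addr0.
  by rewrite (nth_map (i, j)) ?nth_index // -(size_map (fun ij => minorD K d ij.1 ij.2)).
by move=> k /negPf hk'; rewrite -val_eqE /= in hk'; rewrite hk' mul0r.
Qed.

End Ideal.

Section Phi.
Variables (K : fieldType) (m : nat) (d : 'I_m -> nat).
Hypothesis hd : forall i, (0 < d i)%N.
Variable i0 : 'I_m.
Local Notation P := {mpoly K[m + m]}.
Local Notation I := (@I2D K m d).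

Definition L (i : 'I_m) : 'I_(m + m) := lshift m i.
Definition Rr (i : 'I_m) : 'I_(m + m) := rshift m i.
Definition z := L i0.
Definition DD := (\prod_(i < m) d i)%N.
Definition e (k : 'I_m) := (\prod_(l < m | l != k) d l)%N.
Definition w (i : 'I_m) : 'X_{1..m+m} := (U_(Rr i) + U_(z) *+ e i)%MM.
Definition h (t : 'I_(m+m)) : P :=
  match split t with inl i => 'X_[w i] | inr i => 'X_(Rr i) end.
Definition phi (p : P) : P := p \mPo [tuple h t | t < m + m].
Lemma phiM a b : phi (a * b) = phi a * phi b. Proof. exact: rmorphM. Qed.
Lemma phiB a b : phi (a - b) = phi a - phi b. Proof. exact: rmorphB. Qed.
Lemma phiD a b : phi (a + b) = phi a + phi b. Proof. exact: rmorphD. Qed.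
Lemma phiXn a k : phi (a ^+ k) = phi a ^+ k. Proof. exact: rmorphXn. Qed.
Lemma phi1 : phi 1 = 1. Proof. exact: rmorph1. Qed.
Lemma phiZ c a : phi (c *: a) = c *: phi a. Proof. exact: comp_mpolyZ. Qed.
Lemma phi_sum (s : seq 'X_{1..m+m}) (F : 'X_{1..m+m} -> P) :
  phi (\sum_(x <- s) F x) = \sum_(x <- s) phi (F x).
Proof. exact: rmorph_sum. Qed.
Lemma phi_sumo n (F : 'I_n -> P) :
  phi (\sum_(x < n) F x) = \sum_(x < n) phi (F x).
Proof. exact: rmorph_sum. Qed.
Definition Phi (mu : 'X_{1..m+m}) : 'X_{1..m+m} :=
  (\sum_(i<m) w i *+ mu (L i) + \sum_(i<m) U_(Rr i) *+ mu (Rr i))%MM.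

Lemma phiX mu : phi 'X_[mu] = 'X_[Phi mu].
Proof.
rewrite /phi comp_mpolyX big_split_ord /= /Phi mpolyXD -!mprodXnE.
congr (_ * _); apply: eq_bigr => i _; rewrite tnth_mktuple /h.
  by rewrite (unsplitK (inl i : 'I_m + 'I_m)).
by rewrite (unsplitK (inr i : 'I_m + 'I_m)).
Qed.

Lemma sum_ind (F : 'I_m -> nat) k : (\sum_(i < m) (i == k) * F i)%N = F k.
Proof. by rewrite (bigD1 k) //= eqxx mul1n big1 ?addn0 // => i /negPf ->. Qed.

Lemma PhiR mu k : Phi mu (Rr k) = (mu (L k) + mu (Rr k))%N.
Proof.
rewrite /Phi mnmDE !mnm_sumE.
under eq_bigr => i _ do rewrite mulmnE mnmDE mulmnE !mnm1E /Rr eq_rshift /z /L eq_lrshift mul0n addn0.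
under [X in (_ + X)%N]eq_bigr => i _ do rewrite mulmnE mnm1E /Rr eq_rshift.
by rewrite !sum_ind.
Qed.

Lemma Phiz mu : Phi mu z = (\sum_(i < m) mu (L i) * e i)%N.
Proof.
rewrite /Phi mnmDE !mnm_sumE.
under eq_bigr => i _ do rewrite mulmnE mnmDE mulmnE !mnm1E /Rr /z /L eq_rlshift eqxx add0n mul1n mulnC.
under [X in (_ + X)%N]eq_bigr => i _ do rewrite mulmnE mnm1E /Rr /z /L eq_rlshift mul0n.
by rewrite [X in (_ + X)%N]big1 ?addn0.
Qed.


Lemma deE k : (d k * e k)%N = DD.
Proof. by rewrite /DD (bigD1 k). Qed.

Lemma e_gt0 k : (0 < e k)%N.
Proof. by rewrite /e prodn_gt0. Qed.

Lemma DD_gt0 : (0 < DD)%N.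
Proof. by rewrite /DD prodn_gt0. Qed.

Lemma dvd_e k l : k != l -> (d k %| e l)%N.
Proof. by move=> hkl; rewrite /e (bigD1 k) //= dvdn_mulr. Qed.

Lemma coprime_e (hc : forall i j : 'I_m, (i < j)%N -> coprime (d i) (d j)) k :
  coprime (e k) (d k).
Proof.
rewrite /e; apply: (big_ind (fun x => coprime x (d k))); first exact: coprime1n.
  by move=> x y; rewrite coprimeMl => -> ->.
move=> l hlk; case: (ltngtP l k) => [h|h|/val_inj h]; last by rewrite h eqxx in hlk.
  exact: hc.
by rewrite coprime_sym; apply: hc.
Qed.

Lemma phi_x i : phi ('X_(L i)) = 'X_(Rr i) * 'X_z ^+ e i.
Proof.
rewrite /phi comp_mpolyXU -(tnth_nth 0) tnth_mktuple /h.
rewrite (unsplitK (inl i : 'I_m + 'I_m)) /w mpolyXD -mpolyXn //.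
Qed.

Lemma phi_y i : phi ('X_(Rr i)) = 'X_(Rr i).
Proof.
rewrite /phi comp_mpolyXU -(tnth_nth 0) tnth_mktuple /h.
by rewrite (unsplitK (inr i : 'I_m + 'I_m)).
Qed.

Lemma phi_minor i j : phi (minorD K d i j) = 0.
Proof.
rewrite /minorD /xv /yv !(phiB, phiM, phiXn).
rewrite !phi_x !phi_y !exprMn -!exprM.
rewrite mulnC deE mulnC deE.
apply/eqP; rewrite subr_eq0; apply/eqP; ring.
Qed.

Lemma phiI p : I p -> phi p = 0.
Proof.
move=> /idealP[f ->]; rewrite phi_sumo big1 // => k _.
rewrite phiM.
have : (minors2 K d)`_k \in minors2 K d by rewrite mem_nth.
by case/mapP=> ij _ ->; rewrite phi_minor mulr0.
Qed.


Definition standard (mu : 'X_{1..m+m}) : bool :=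
  [forall i : 'I_m, forall j : 'I_m,
     (i < j)%N ==> ~~ ((d i <= mu (L i))%N && (d j <= mu (Rr j))%N)].

Definition M (mu : 'X_{1..m+m}) : nat := (\sum_(i < m) mu (L i) * (e i * (m - i)))%N.

Lemma MD a b : M (a + b)%MM = (M a + M b)%N.
Proof. by rewrite /M -big_split; apply: eq_bigr => i _; rewrite mnmDE mulnDl. Qed.

Lemma sum_ind2 (F : 'I_m -> nat) k : (\sum_(i < m) (k == i) * F i)%N = F k.
Proof. by rewrite (bigD1 k) //= eqxx mul1n big1 ?addn0 // => i; rewrite eq_sym => /negPf ->. Qed.

Lemma ML k c : M (U_(L k) *+ c)%MM = (c * (e k * (m - k)))%N.
Proof.
rewrite /M; under eq_bigr => i _ do rewrite mulmnE mnm1E /L eq_lshift -mulnA.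
by rewrite (sum_ind2 (fun i => c * (e i * (m - i)))%N).
Qed.

Lemma MR k c : M (U_(Rr k) *+ c)%MM = 0%N.
Proof.
rewrite /M big1 // => i _; by rewrite mulmnE mnm1E /L /Rr eq_rlshift.
Qed.

Lemma reduce mu : exists nu, standard nu /\ I ('X_[mu] - 'X_[nu]).
Proof.
suff : forall n mu, (M mu < n)%N -> exists nu, standard nu /\ I ('X_[mu] - 'X_[nu]).
  by move=> /(_ (M mu).+1 mu (ltnSn _)).
elim=> [//|n IH] {}mu hM.
case hs: (standard mu).
  by exists mu; split=> //; rewrite subrr; apply: I0.
move/negbT: hs; rewrite /standard => /forallPn[i] /forallPn[j].
rewrite negb_imply negbK => /andP[hij /andP[hi hj]].
set a := (U_(L i) *+ d i + U_(Rr j) *+ d j)%MM.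
set b := (U_(L j) *+ d j + U_(Rr i) *+ d i)%MM.
have ha : (a <= mu)%MM.
  apply/mnm_lepP => t; rewrite mnmDE !mulmnE !mnm1E.
  case: (eqVneq (L i) t) => [<-|_]; first by rewrite /L /Rr eq_rlshift mul1n addn0.
  by case: (eqVneq (Rr j) t) => [<-|_]; rewrite //= mul1n.
set rho := (mu - a)%MM.
have hmu : mu = (rho + a)%MM by rewrite submK.
set mu' := (rho + b)%MM.
have hI : I ('X_[mu] - 'X_[mu']).
  have -> : 'X_[mu] - 'X_[mu'] = 'X_[rho] * minorD K d i j.
    rewrite {1}hmu /mu' /a /b /minorD /xv /yv !mpolyXD -!mpolyXn /L /Rr; ring.
  by apply: IM; apply: Iminor.
have hM' : (M mu' < n)%N.
  suff : (M mu' < M mu)%N by lia.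
  rewrite /mu' [X in (_ < M X)%N]hmu.
  rewrite !MD !ML !MR !addn0 ltn_add2l !mulnA mulnC deE mulnC deE.
  rewrite ltn_pmul2l ?DD_gt0 //; have := ltn_ord j; lia.
have [nu [hnu hInu]] := IH mu' hM'.
exists nu; split=> //.
by have := ID hI hInu; rewrite addrA subrK.
Qed.


Lemma nf p : exists q, I (p - q) /\ (forall nu, nu \in msupp q -> standard nu).
Proof.
elim/mpolyind: p => [|c mu p _ _ [q [hq hs]]].
  by exists 0; split; [rewrite subr0; apply: I0 | rewrite msupp0].
have [nu [hnu hI]] := reduce mu.
exists (c *: 'X_[nu] + q); split.
  have -> : c *: 'X_[mu] + p - (c *: 'X_[nu] + q) = c%:MP * ('X_[mu] - 'X_[nu]) + (p - q).
    by rewrite -!mul_mpolyC; ring.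
  by apply: ID => //; apply: IM.
move=> x /msuppD_le; rewrite mem_cat => /orP[/msuppZ_le|/hs //].
by rewrite msuppX inE => /eqP ->.
Qed.

Section Coprime.
Hypothesis hc : forall i j : 'I_m, (i < j)%N -> coprime (d i) (d j).

Lemma modeq nu nu' : Phi nu z = Phi nu' z ->
  forall k, nu (L k) = nu' (L k) %[mod d k].
Proof.
rewrite !Phiz => hN k.
have key x : ((\sum_(i < m) x (L i) * e i) %% d k = (x (L k) * e k) %% d k)%N.
  rewrite (bigD1 k) //= -modnDmr.
  have hd0 : (d k %| \sum_(i < m | i != k) x (L i) * e i)%N.
    by apply: dvdn_sum => i hi; apply: dvdn_mull; apply: dvd_e; rewrite eq_sym.
  by rewrite (eqP hd0) addn0.
have := key nu; rewrite hN key => hm.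
have hce : coprime (d k) (e k) by rewrite coprime_sym coprime_e.
exact/esym/(mod_cancel hce hm).
Qed.

Lemma key_lt (nu nu' : 'X_{1..m+m}) (k : 'I_m) : standard nu' ->
  (forall l, nu (L l) + nu (Rr l) = nu' (L l) + nu' (Rr l))%N ->
  (forall l, nu (L l) = nu' (L l) %[mod d l]) ->
  (forall l : 'I_m, (l < k)%N -> nu (L l) = nu' (L l)) ->
  (nu (L k) < nu' (L k))%N ->
  (\sum_(i < m) nu (L i) * e i < \sum_(i < m) nu' (L i) * e i)%N.
Proof.
move=> hs hg hm hlt hk.
have hdk : (d k <= nu' (L k))%N.
  have := gap hk (hm k); lia.
have hle l : l != k -> (nu (L l) <= nu' (L l))%N.
  move=> hlk; case: (ltngtP l k) => [h|h|/val_inj h]; last by rewrite h eqxx in hlk.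
    by rewrite hlt.
  have hb : (nu' (Rr l) < d l)%N.
    have := forallP (forallP hs k) l; rewrite h /= hdk /= -ltnNge; exact.
  rewrite leqNgt; apply/negP => hl.
  have := gap hl (esym (hm l)); have := hg l; lia.
rewrite (bigD1 k) //= [X in (_ < X)%N](bigD1 k) //=.
have h1 : (nu (L k) * e k < nu' (L k) * e k)%N by rewrite ltn_pmul2r ?e_gt0.
have h2 : (\sum_(i < m | i != k) nu (L i) * e i <= \sum_(i < m | i != k) nu' (L i) * e i)%N.
  by apply: leq_sum => l hl; rewrite leq_mul2r hle ?orbT.
by rewrite -addSn; apply: leq_add.
Qed.

Lemma Phi_inj nu nu' : standard nu -> standard nu' -> Phi nu = Phi nu' -> nu = nu'.
Proof.
move=> hs hs' hP.
have hg l : (nu (L l) + nu (Rr l) = nu' (L l) + nu' (Rr l))%N by rewrite -!PhiR hP.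
have hN : (\sum_(i < m) nu (L i) * e i = \sum_(i < m) nu' (L i) * e i)%N by rewrite -!Phiz hP.
have hm := @modeq nu nu' ltac:(by rewrite hP).
have ha l : nu (L l) = nu' (L l).
  apply/eqP; apply/negPn/negP => hl.
  case: (@arg_minnP _ l (fun k => nu (L k) != nu' (L k)) (fun k : 'I_m => (k : nat)) hl) => k hk hmin.
  have hlt (l' : 'I_m) : (l' < k)%N -> nu (L l') = nu' (L l').
    move=> hl'; apply/eqP; apply/negPn/negP => /hmin; lia.
  case: (ltngtP (nu (L k)) (nu' (L k))) => h.
  - by have := key_lt hs' hg hm hlt h; rewrite hN ltnn.
  - have := @key_lt nu' nu k hs (fun l => esym (hg l)) (fun l => esym (hm l))
      (fun l hl => esym (hlt l hl)) h.
    by rewrite hN ltnn.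
  - by rewrite h eqxx in hk.
apply/mnmP => t; rewrite -(splitK t); case: (split t) => i /=.
  exact: ha.
have := hg i; have := ha i; rewrite /L /Rr; lia.
Qed.

Lemma ker p : phi p = 0 -> I p.
Proof.
move=> hp; have [q [hq hs]] := nf p.
have hq0 : phi q = 0.
  by have := phiI hq; rewrite phiB hp sub0r => /eqP; rewrite oppr_eq0 => /eqP.
suff hz : q = 0 by rewrite hz subr0 in hq.
rewrite (mpolyE q) big1_seq // => nu /andP[_ hnu].
suff -> : q@_nu = 0 by rewrite scale0r.
have : (phi q)@_(Phi nu) = q@_nu.
  rewrite {1}(mpolyE q) phi_sum (big_morph (mcoeff _) (mcoeffD _) (mcoeff0 _ _)).
  rewrite (bigD1_seq nu) ?msupp_uniq //= phiZ phiX mcoeffZ mcoeffX eqxx mulr1.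
  rewrite big1_seq ?addr0 // => x /andP[hx hxs].
  rewrite phiZ phiX mcoeffZ mcoeffX.
  case: (eqVneq (Phi x) (Phi nu)) => [/(Phi_inj (hs _ hxs) (hs _ hnu)) hxe|_].
    by rewrite hxe eqxx in hx.
  by rewrite mulr0.
by rewrite hq0 mcoeff0.
Qed.

Lemma prime_if : prime_ideal I.
Proof.
split.
  by move=> /phiI; rewrite phi1 => /eqP; rewrite oner_eq0.
move=> a b /phiI; rewrite phiM => /eqP; rewrite mulf_eq0 => /orP[/eqP/ker|/eqP/ker].
  by left.
by right.
Qed.

End Coprime.
End Phi.

Section Psi.
Variables (K : fieldType) (m : nat) (d : 'I_m -> nat).
Hypothesis hd : forall i, (0 < d i)%N.
Variables (i j : 'I_m).
Hypothesis hij : (i < j)%N.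
Local Notation P := {mpoly K[m + m]}.
Local Notation I := (@I2D K m d).

Definition inS (t : 'I_(m + m)) := (t == L i) || (t == Rr j).
Definition hpsi (t : 'I_(m+m)) : P := if inS t then 'X_t else 0.
Definition psi (p : P) : P := p \mPo [tuple hpsi t | t < m + m].
Lemma psiM a b : psi (a * b) = psi a * psi b. Proof. exact: rmorphM. Qed.
Lemma psiB a b : psi (a - b) = psi a - psi b. Proof. exact: rmorphB. Qed.
Lemma psiXn a k : psi (a ^+ k) = psi a ^+ k. Proof. exact: rmorphXn. Qed.
Lemma psi_sumo n (F : 'I_n -> P) :
  psi (\sum_(x < n) F x) = \sum_(x < n) psi (F x).
Proof. exact: rmorph_sum. Qed.

Lemma psiX_in (mu : 'X_{1..m+m}) : (forall t, mu t != 0%N -> inS t) -> psi 'X_[mu] = 'X_[mu].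
Proof.
move=> H; rewrite /psi comp_mpolyX [RHS]mpolyXE_id; apply: eq_bigr => t _.
rewrite tnth_mktuple /hpsi; case: ifP => // hn.
have -> : mu t = 0%N by apply/eqP; apply/negPn/negP => /H; rewrite hn.
by rewrite !expr0.
Qed.

Lemma psiX_out (mu : 'X_{1..m+m}) t : mu t != 0%N -> ~~ inS t -> psi 'X_[mu] = 0.
Proof.
move=> h1 h2; rewrite /psi comp_mpolyX (bigD1 t) //= tnth_mktuple /hpsi (negPf h2).
by rewrite expr0n (negPf h1) mul0r.
Qed.

Definition tau : 'X_{1..m+m} := (U_(L i) *+ d i + U_(Rr j) *+ d j)%MM.

Lemma monoE (a b : 'I_(m+m)) (ka kb : nat) :
  'X_a ^+ ka * 'X_b ^+ kb = 'X_[U_(a) *+ ka + U_(b) *+ kb] :> P.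
Proof. by rewrite mpolyXD !mpolyXn. Qed.

Lemma mono2E (a b t : 'I_(m+m)) (ka kb : nat) :
  (U_(a) *+ ka + U_(b) *+ kb)%MM t = ((a == t) * ka + (b == t) * kb)%N.
Proof. by rewrite mnmDE !mulmnE !mnm1E. Qed.

Lemma psi_minor (k l : 'I_m) : (k < l)%N -> exists c, psi (minorD K d k l) = c * 'X_[tau].
Proof.
move=> hkl; rewrite /minorD /xv /yv !monoE psiB.
have -> : psi 'X_[U_(lshift m l) *+ d l + U_(rshift m k) *+ d k] = 0.
  case: (eqVneq l i) => [hli|hli].
    apply: (@psiX_out _ (rshift m k)).
      by rewrite mono2E eq_lrshift eqxx mul1n add0n -lt0n hd.
    rewrite /inS /L /Rr eq_rlshift eq_rshift /=.
    apply/eqP => hkj; move: hkl hij; rewrite hli hkj; lia.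
  apply: (@psiX_out _ (lshift m l)).
    by rewrite mono2E eqxx eq_rlshift mul1n addn0 -lt0n hd.
  by rewrite /inS /L /Rr eq_lshift eq_lrshift (negPf hli).
case: (eqVneq k i) => [hki|hki]; last first.
  exists 0; rewrite mul0r subr0; apply: (@psiX_out _ (lshift m k)).
    by rewrite mono2E eqxx eq_rlshift mul1n addn0 -lt0n hd.
  by rewrite /inS /L /Rr eq_lshift eq_lrshift (negPf hki).
case: (eqVneq l j) => [hlj|hlj]; last first.
  exists 0; rewrite mul0r subr0; apply: (@psiX_out _ (rshift m l)).
    by rewrite mono2E eq_lrshift eqxx mul1n add0n -lt0n hd.
  by rewrite /inS /L /Rr eq_rlshift eq_rshift (negPf hlj).
subst k l; exists 1; rewrite mul1r subr0 psiX_in // => t.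
move=> ht; apply/negPn/negP => hn; move: ht.
rewrite /inS /L /Rr negb_or in hn; case/andP: hn => h1 h2.
by rewrite mono2E (eq_sym (lshift m i)) (negPf h1) (eq_sym (rshift m j)) (negPf h2).
Qed.

Lemma psiI p : I p -> exists c, psi p = c * 'X_[tau].
Proof.
move=> /idealP[f ->]; rewrite psi_sumo.
apply: (big_ind (fun x => exists c, x = c * 'X_[tau])).
- by exists 0; rewrite mul0r.
- by move=> x y [c1 ->] [c2 ->]; exists (c1 + c2); rewrite mulrDl.
move=> k _; rewrite psiM.
have : (minors2 K d)`_k \in minors2 K d by rewrite mem_nth.
case/mapP=> kl; rewrite mem_enum => hkl ->.
have [c ->] := psi_minor hkl.
by exists (psi (f k) * c); rewrite mulrA.
Qed.

Lemma notmult (mu0 : 'X_{1..m+m}) c : (mu0 (L i) < d i)%N -> 'X_[mu0] <> c * 'X_[tau] :> P.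
Proof.
move=> hlt heq.
have : mu0 \in msupp ('X_[mu0] : P) by rewrite msuppX inE.
rewrite heq (perm_mem (msuppMX _ _)) => /mapP[k _ hk].
move: hlt; rewrite hk mnmDE /tau mono2E eqxx /L /Rr eq_rlshift mul1n addn0.
by rewrite ltnNge leq_addr.
Qed.

Lemma psi_in2 ka kb :
  psi 'X_[U_(L i) *+ ka + U_(Rr j) *+ kb] = 'X_[U_(L i) *+ ka + U_(Rr j) *+ kb].
Proof.
apply: psiX_in => t ht; apply/negPn/negP => hn; move: ht.
rewrite /inS negb_or in hn; case/andP: hn => h1 h2.
by rewrite mono2E (eq_sym (L i)) (negPf h1) (eq_sym (Rr j)) (negPf h2).
Qed.

End Psi.

Theorem proposition4p9 (K : fieldType) (m : nat) (d : 'I_m -> nat) :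
  (2 <= m)%N -> (forall i, (0 < d i)%N) ->
  (prime_ideal (@I2D K m d) <->
   (forall i j : 'I_m, (i < j)%N -> coprime (d i) (d j))).
Proof.
move=> hm hd; split; last first.
  move=> hc; have h0 : (0 < m)%N by lia.
  exact: (@prime_if K m d hd (Ordinal h0) hc).
move=> [h1 hpr] i j hij.
apply/negPn/negP => hnc.
set g := gcdn (d i) (d j).
have hg0 : (0 < g)%N by rewrite gcdn_gt0 hd.
have hg2 : (1 < g)%N by rewrite ltn_neqAle eq_sym hg0 andbT.
set ai := (d i %/ g)%N; set aj := (d j %/ g)%N.
have hai : (ai * g)%N = d i by rewrite divnK // dvdn_gcdl.
have haj : (aj * g)%N = d j by rewrite divnK // dvdn_gcdr.
have hai0 : (0 < ai)%N by rewrite divn_gt0 // dvdn_leq ?hd ?dvdn_gcdl.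
have haj0 : (0 < aj)%N by rewrite divn_gt0 // dvdn_leq ?hd ?dvdn_gcdr.
pose al : 'X_{1..m+m} := (U_(L i) *+ ai + U_(Rr j) *+ aj)%MM.
set A : {mpoly K[m+m]} := 'X_[al].
set B : {mpoly K[m+m]} := 'X_[U_(L j) *+ aj + U_(Rr i) *+ ai].
have hmin : minorD K d i j = A ^+ g - B ^+ g.
  by rewrite /minorD /xv /yv /A /B /al -!monoE !exprMn -!exprM hai haj.
have hI := @Iminor K m d i j hij.
rewrite hmin subrXX in hI.
have hpA : psi i j A = A by rewrite /A /al psi_in2.
have hpB : psi i j B = 0.
  apply: (@psiX_out _ _ i j _ (L j)).
    by rewrite mono2E eqxx /L /Rr eq_rlshift mul1n addn0 -lt0n.
  rewrite /inS /L /Rr eq_lshift eq_lrshift orbF.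
  by apply/eqP => hji; move: hij; rewrite hji ltnn.
case: (hpr _ _ hI) => hI'.
  have [c hc] := psiI hd hij hI'.
  move: hc; rewrite psiB hpA hpB subr0; apply: notmult.
  by rewrite /al mono2E eqxx /L /Rr eq_rlshift mul1n addn0 -hai ltn_Pmulr.
have [c hc] := psiI hd hij hI'.
move: hc; rewrite psi_sumo (bigD1 (Ordinal hg0)) //= big1; last first.
  move=> k hk; rewrite psiM !psiXn hpB expr0n.
  have -> : (k == 0%N :> nat) = false.
    by apply/negP => /eqP hk0; move: hk; rewrite -val_eqE /= hk0.
  by rewrite mulr0.
rewrite addr0 subn0 expr0 mulr1 psiXn hpA /A mpolyXn; apply: notmult.
rewrite mulmnE /al mono2E eqxx /L /Rr eq_rlshift mul1n addn0 -hai ltn_pmul2l //.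
by rewrite prednK // ltnSn.
Qed.
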